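(* Let $I$ be a monomial ideal in $R=K[x_1,\ldots,x_d]$ ($K$ a field), and let $r=\frac{p}{q}$ be a positive rational number with $p,q$ positive integers. Define the bounded convex set $$\mathcal{C}(I,r)=r\cdot \operatorname{np}(I)+\left(d-\tfrac{1}{q}\right)\cdot S_d$$ (Minkowski sum). If $\mathbf{x}^{\mathbf{a}}$ is a minimal monomial generator of $\overline{I^r}$, then $\mathbf{a}\in\mathcal{C}(I,r)$. Moreover, if $\mathbf{a}\in\mathcal{C}(I,r)\cap\mathbb{N}^d$ then $\mathbf{x}^{\mathbf{a}}\in\overline{I^r}$, and consequently $\overline{I^r}=(\{\mathbf{x}^{\mathbf{a}}\mid \mathbf{a}\in\mathcal{C}(I,r)\cap\mathbb{N}^d\})$.
   Context: $\mathbb{N}$ denotes the non-negative integers and $\mathbf{x}^{\mathbf{a}}=x_1^{a_1}\cdots x_d^{a_d}$. For a monomial ideal $I$, $NP(I)$ is the convex hull in $\mathbb{R}^d$ of $\{\mathbf{a}\in\mathbb{N}^d\mid \mathbf{x}^{\mathbf{a}}\in I\}$, and the Newton polytope $\operatorname{np}(I)$ is the convex hull of the exponent vectors of the minimal monomial generators of $I$. For real $r\ge0$, the $r$-th real power is $\overline{I^r}=(\{\mathbf{x}^{\mathbf{a}}\mid \mathbf{a}\in r\cdot NP(I)\cap\mathbb{N}^d\})$, where $r\cdot X=\{r\mathbf{v}\mid\mathbf{v}\in X\}$. $S_d=\{\mathbf{a}\in\mathbb{R}^d\mid a_i\ge0,\ a_1+\cdots+a_d\le1\}$ is the unit simplex.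 The Minkowski sum is $A+B=\{\mathbf{a}+\mathbf{b}\mid \mathbf{a}\in A,\mathbf{b}\in B\}$. *)

(* Defs.v *)
From HB Require Import structures.
From mathcomp Require Import all_boot all_order all_algebra.
From mathcomp Require Import reals.
Unset Printing Implicit Defensive.
Import Order.TTheory GRing.Theory Num.Theory.
Local Open Scope ring_scope.

Definition expo (d : nat) := 'I_d -> nat.
Definition vec (R : realType) (d : nat) := 'I_d -> R.

(* Componentwise order on exponents: x^b divides x^a. *)
Definition expo_le d (b a : expo d) : Prop := forall i, (b i <= a i)%N.
Arguments expo_le {d}.

(* A monomial ideal of K[x_1..x_d] is encoded by the set of exponents of the
   monomials it contains; such a set is exactly an upward-closed subset of N^d. *)
Definition monomial_ideal d (E : expo d -> Prop) : Prop :=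
  forall a b, E a -> expo_le a b -> E b.
Arguments monomial_ideal {d}.

Definition gen_ideal d (S : expo d -> Prop) : expo d -> Prop :=
  fun b => exists2 a, S a & expo_le a b.
Arguments gen_ideal {d}.

Definition min_gen d (E : expo d -> Prop) (a : expo d) : Prop :=
  E a /\ forall b, E b -> expo_le b a -> forall i, b i = a i.
Arguments min_gen {d}.

Definition natv (R : realType) d (a : expo d) : vec R d := fun i => (a i)%:R.
Arguments natv R {d}.

Definition conv (R : realType) d (A : vec R d -> Prop) : vec R d -> Prop :=
  fun x => exists n (P : 'I_n -> vec R d) (l : 'I_n -> R),
    [/\ forall k, A (P k), forall k, 0 <= l k, \sum_(k < n) l k = 1
      & forall i, x i = \sum_(k < n) l k * P k i].
Arguments conv R {d}.

Definition NP (R : realType) (d : nat) (E : expo d -> Prop) : vec R d -> Prop :=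
  conv R (fun v => exists2 a, E a & v = natv R a).
Arguments NP R {d}.

Definition np (R : realType) d (E : expo d -> Prop) : vec R d -> Prop :=
  conv R (fun v => exists2 a, min_gen E a & v = natv R a).
Arguments np R {d}.

Definition scale (R : realType) d (r : R) (X : vec R d -> Prop) : vec R d -> Prop :=
  fun v => exists2 w, X w & forall i, v i = r * w i.
Arguments scale {R d}.

Definition minkowski (R : realType) d (A B : vec R d -> Prop) : vec R d -> Prop :=
  fun v => exists a b, [/\ A a, B b & forall i, v i = a i + b i].
Arguments minkowski {R d}.

Definition simplex (R : realType) d : vec R d -> Prop :=
  fun v => (forall i, 0 <= v i) /\ \sum_(i < d) v i <= 1.

Definition real_power (R : realType) d (E : expo d -> Prop) (r : R) : expo d -> Prop :=
  gen_ideal (fun a => scale r (NP R E) (natv R a)).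
Arguments real_power R {d}.

Definition Cset (R : realType) d (E : expo d -> Prop) (p q : nat) : vec R d -> Prop :=
  minkowski (scale (p%:R / q%:R) (np R E))
            (scale (d%:R - q%:R^-1) (simplex R d)).
Arguments Cset R {d}.

(* Main.v *)
Require Import Defs.
From HB Require Import structures.
From mathcomp Require Import all_boot all_order all_algebra.
From mathcomp Require Import reals.
From mathcomp Require Import zify.
From mathcomp.algebra_tactics Require Import ring lra.
From Stdlib Require Import Classical.
Import Order.TTheory GRing.Theory Num.Theory.
Local Open Scope ring_scope.
Set Implicit Arguments.
Unset Strict Implicit.

Lemma exists_min_gen d (X : expo d -> Prop) a :
  X a -> exists2 m, min_gen X m & expo_le m a.
Proof.
move: a; suff H : forall n a, (\sum_i a i <= n)%N -> X a ->
    exists2 m, min_gen X m & expo_le m a.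
  by move=> a; apply: (H _ a (leqnn _)).
elim=> [|n IH] a Ha Xa.
  exists a => //; split=> // b Xb ba i.
  apply/eqP; rewrite eqn_leq ba /=.
  have : (a i <= \sum_j a j)%N by rewrite (bigD1 i) //= leq_addr.
  lia.
case: (classic (min_gen X a)) => [Hm|Hm]; first by exists a.
have [b [Xb [ba [i Hi]]]] : exists b, X b /\ expo_le b a /\ exists i, b i <> a i.
  apply: NNPP => Hn; apply: Hm; split=> // b Xb ba i.
  apply: NNPP => Hbi; apply: Hn; exists b; split=> //; split=> //; exists i; exact: Hbi.
have lt : (\sum_j b j < \sum_j a j)%N.
  rewrite (bigD1 i) //= [X in (_ < X)%N](bigD1 i) //=.
  have : (\sum_(j | j != i) b j <= \sum_(j | j != i) a j)%N by apply: leq_sum.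
  have h3 : (b i < a i)%N by rewrite ltn_neqAle (ba i) andbT; apply/eqP.
  move=> h2; apply: leq_ltn_trans (leq_add (leqnn _) h2) _.
  by rewrite ltn_add2r.
have [m Hm1 Hm2] := IH b ltac:(lia) Xb.
exists m => // j; exact: leq_trans (Hm2 j) (ba j).
Qed.

Lemma conv_ext (R : realType) d (A : vec R d -> Prop) x y :
  conv R A x -> (forall i, x i = y i) -> conv R A y.
Proof.
move=> [n [P [l [H1 H2 H3 H4]]]] e; exists n, P, l; split=> // i.
by rewrite -e.
Qed.

Lemma conv_pt (R : realType) d (A : vec R d -> Prop) x : A x -> conv R A x.
Proof.
move=> Ax; exists 1%N, (fun _ => x), (fun _ => 1); split=> //.
  by rewrite big_ord1.
by move=> i; rewrite big_ord1 mul1r.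
Qed.

Lemma conv2 (R : realType) d (A : vec R d -> Prop) x z (t : R) :
  conv R A x -> conv R A z -> 0 <= t <= 1 ->
  conv R A (fun j => (1 - t) * x j + t * z j).
Proof.
move=> [n [P [l [H1 H2 H3 H4]]]] [m [Q [k [K1 K2 K3 K4]]]] /andP[t0 t1].
pose F (i : 'I_(n + m)) := match split i with inl a => P a | inr b => Q b end.
pose L (i : 'I_(n + m)) := match split i with inl a => (1 - t) * l a | inr b => t * k b end.
have eL : forall a, L (lshift m a) = (1 - t) * l a.
  by move=> a; rewrite /L (unsplitK (inl _ a)).
have eR : forall b, L (rshift n b) = t * k b.
  by move=> b; rewrite /L (unsplitK (inr _ b)).
have fL : forall a, F (lshift m a) = P a.
  by move=> a; rewrite /F (unsplitK (inl _ a)).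
have fR : forall b, F (rshift n b) = Q b.
  by move=> b; rewrite /F (unsplitK (inr _ b)).
exists (n + m)%N, F, L; split.
- by move=> i; rewrite /F; case: split.
- move=> i; rewrite /L; case: split => a.
    by apply: mulr_ge0 => //; rewrite subr_ge0.
  exact: mulr_ge0.
- rewrite big_split_ord /=.
  under eq_bigr do rewrite eL.
  under [X in _ + X]eq_bigr do rewrite eR.
  by rewrite -!mulr_sumr H3 K3 !mulr1 subrK.
- move=> j /=; rewrite big_split_ord /=.
  under [X in _ = X + _]eq_bigr do rewrite eL fL.
  under [X in _ = _ + X]eq_bigr do rewrite eR fR.
  rewrite H4 K4 !mulr_sumr; congr (_ + _); apply: eq_bigr => i _; ring.
Qed.

Lemma NP_shift (R : realType) d (E : expo d -> Prop) (y : vec R d) i (N : nat) :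
  monomial_ideal E -> NP R E y ->
  NP R E (fun j => y j + (if j == i then N%:R else 0)).
Proof.
move=> mE [n [P [l [H1 H2 H3 H4]]]].
have [a Ea ePa] := fin_all_exists2 H1.
exists n, (fun k => natv R (fun j => (a k j + (if j == i then N else 0))%N)), l.
split=> //.
- move=> k; eexists; last reflexivity.
  by apply: mE (Ea k) _ => j; apply: leq_addr.
- move=> j; rewrite H4 /natv /=.
  under [RHS]eq_bigr do rewrite natrD mulrDr.
  rewrite big_split /= -mulr_suml H3 mul1r; congr (_ + _).
    by apply: eq_bigr => k _; rewrite ePa.
  by case: (j == i).
Qed.

Lemma NP_addcoord (R : realType) d (E : expo d -> Prop) (y : vec R d) i (s : R) :
  monomial_ideal E -> NP R E y -> 0 <= s ->
  NP R E (fun j => y j + (if j == i then s else 0)).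
Proof.
move=> mE Ny s0.
set N := Num.Def.archi_bound s.
have sN : s < N%:R by apply: archi_boundP.
have N0 : 0 < (N%:R : R) by apply: le_lt_trans sN.
have N0' : (N%:R : R) != 0 by rewrite gt_eqF.
have Ht : 0 <= s / N%:R <= 1.
  apply/andP; split; first by apply: divr_ge0 => //; apply: ltW.
  by rewrite ler_pdivrMr // mul1r ltW.
have C := conv2 Ny (NP_shift i N mE Ny) Ht.
apply: conv_ext C _ => j /=.
case: (j == i); last by ring.
by field.
Qed.

Lemma NP_up (R : realType) d (E : expo d -> Prop) (y z : vec R d) :
  monomial_ideal E -> NP R E y -> (forall j, y j <= z j) -> NP R E z.
Proof.
move=> mE Ny yz.
suff H : forall k, (k <= d)%N -> NP R E (fun j : 'I_d => if (j < k)%N then z j else y j).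
  by apply: conv_ext (H d (leqnn d)) _ => j; rewrite ltn_ord.
elim=> [|k IH] kd.
  by apply: conv_ext Ny _ => j.
have kd' : (k < d)%N by [].
pose i := Ordinal kd'.
have := NP_addcoord i mE (IH (ltnW kd)) (s := z i - y i).
rewrite subr_ge0 => /(_ (yz i)) C.
apply: conv_ext C _ => j.
case: (eqVneq j i) => [->|ne] /=; first by rewrite ltnn ltnSn; ring.
have nk : (val j != k) by apply: contra ne => /eqP e; apply/eqP/val_inj.
by rewrite addr0 [in RHS]ltnS [in RHS]leq_eqVlt (negbTE nk).
Qed.

Lemma np_NP (R : realType) d (E : expo d -> Prop) u : np R E u -> NP R E u.
Proof.
move=> [n [P [l [H1 H2 H3 H4]]]]; exists n, P, l; split=> // k.
by have [a [Ea _] ->] := H1 k; exists a.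
Qed.

Lemma np_ge0 (R : realType) d (E : expo d -> Prop) u j : np R E u -> 0 <= u j.
Proof.
move=> [n [P [l [H1 H2 H3 H4]]]]; rewrite H4; apply: sumr_ge0 => k _.
by have [a _ ->] := H1 k; apply: mulr_ge0 => //; rewrite /natv ler0n.
Qed.

Lemma NP_below (R : realType) d (E : expo d -> Prop) v :
  NP R E v -> exists2 u, np R E u & forall j, u j <= v j.
Proof.
move=> [n [P [l [H1 H2 H3 H4]]]].
have [a Ea ePa] := fin_all_exists2 H1.
have [m Mm ma] := fin_all_exists2 (fun k => exists_min_gen (Ea k)).
exists (fun j => \sum_(k < n) l k * natv R (m k) j).
  exists n, (fun k => natv R (m k)), l; split=> //.
  by move=> k; exists (m k).
move=> j; rewrite H4; apply: ler_sum => k _; rewrite ePa.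
by apply: ler_wpM2l; [exact: H2 | rewrite /natv ler_nat; apply: ma].
Qed.

Lemma segment_step (R : realType) d (E : expo d -> Prop) (u0 v : vec R d) :
  np R E u0 -> (forall j, u0 j <= v j) ->
  exists2 u, np R E u /\ (forall j, u j <= v j) &
    (exists j, u j = v j) \/ (exists m, min_gen E m /\ forall j, u j = (m j)%:R).
Proof.
move=> npu0 u0v.
have := npu0; case=> n [P [l [H1 H2 H3 H4]]].
have n0 : (0 < n)%N.
  case: n P l H1 H2 H3 H4 => // P l _ _; rewrite big_ord0 => /eqP.
  by rewrite eq_sym oner_eq0.
have [m Mm ePm] := H1 (Ordinal n0).
have npm : np R E (natv R m) by apply: conv_pt; exists m.
case: (boolP [forall j, (m j)%:R <= v j]) => [/forallP Hall|Hnot].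
  exists (natv R m); first by split.
  by right; exists m.
move/forallPn: Hnot => [j0]; rewrite -ltNge => Pj0.
pose f j := (v j - u0 j) / ((m j)%:R - u0 j).
case: (@arg_minP _ _ _ j0 (fun j => v j < (m j)%:R) f Pj0) => i0 Pi0 Hm.
set t := f i0.
have den0 : forall j, v j < (m j)%:R -> 0 < (m j)%:R - u0 j.
  by move=> j Pj; rewrite subr_gt0; apply: le_lt_trans (u0v j) Pj.
have Ht : 0 <= t <= 1.
  have := den0 _ Pi0; have := u0v i0 => h1 h2.
  apply/andP; split.
    by apply: divr_ge0; [rewrite subr_ge0 | apply: ltW].
  rewrite ler_pdivrMr // mul1r; lra.
have C := conv2 npu0 npm Ht.
exists (fun j => (1 - t) * u0 j + t * natv R m j); first split => //.
- move=> j /=; rewrite /natv.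
  case: (boolP (v j < (m j)%:R)) => Pj.
    have tf : t <= f j by apply: Hm.
    have dj := den0 _ Pj.
    have : t * ((m j)%:R - u0 j) <= v j - u0 j.
      by rewrite -ler_pdivlMr.
    lra.
  rewrite -leNgt in Pj; have := u0v j; have := Ht => /andP[t0 t1] h.
  have : (1 - t) * u0 j <= (1 - t) * v j by apply: ler_wpM2l; lra.
  have : t * (m j)%:R <= t * v j by apply: ler_wpM2l.
  lra.
- left; exists i0 => /=; rewrite /natv /t /f.
  have := den0 _ Pi0 => dj.
  field; lra.
Qed.

Lemma part2 (R : realType) d (E : expo d -> Prop) (p q : nat) a :
  monomial_ideal E -> (0 < p)%N -> (0 < q)%N ->
  Cset R E p q (natv R a) -> real_power R E (p%:R / q%:R : R) a.
Proof.
move=> mE p0 q0 [u' [s' [[u npu eu] [s [s0 _] es] ea]]].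
have r0 : 0 < (p%:R / q%:R : R) by apply: divr_gt0; rewrite ltr0n.
exists a; last by move=> i.
exists (fun i => natv R a i / (p%:R / q%:R)); last first.
  by move=> i; rewrite mulrC divfK // gt_eqF.
apply: NP_up mE (np_NP npu) _ => i.
rewrite ler_pdivlMr // ea eu es mulrC lerDl.
apply: mulr_ge0 (s0 i).
have d0 : (1 <= (d%:R : R)) by rewrite ler1n; case: i => /= i; lia.
have : q%:R^-1 <= (1 : R) by rewrite invf_le1 // ?ler1n ?ltr0n.
lra.
Qed.

Lemma part1 (R : realType) d (E : expo d -> Prop) (p q : nat) a :
  monomial_ideal E -> (0 < p)%N -> (0 < q)%N ->
  min_gen (real_power R E (p%:R / q%:R : R)) a -> Cset R E p q (natv R a).
Proof.
move=> mE p0 q0 [[b [v Nv ev] ba] Hmin].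
set r : R := p%:R / q%:R.
have r0 : 0 < r by apply: divr_gt0; rewrite ltr0n.
have eab := Hmin b (ex_intro2 _ _ b (ex_intro2 _ _ v Nv ev) (fun i => leqnn _)) ba.
have ea : forall i, (a i)%:R = r * v i by move=> i; rewrite -eab; apply: ev.
have [u0 npu0 u0v] := NP_below Nv.
have [u [npu uv] Hu] := segment_step npu0 u0v.
pose w j := (a j)%:R - r * u j.
have w0 : forall j, 0 <= w j.
  by move=> j; rewrite /w ea subr_ge0; apply: ler_wpM2l; [apply: ltW | apply: uv].
have w1 : forall j, w j < 1.
  move=> j; rewrite ltNge; apply/negP => Hw.
  have aj : (0 < a j)%N.
    have := np_ge0 j npu => h.
    have : 0 <= r * u j by apply: mulr_ge0 (ltW r0) h.
    move: Hw; rewrite /w => Hw h2.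
    have : (1 : R) <= (a j)%:R by lra.
    by rewrite ler1n.
  pose b' := fun i => if i == j then (a i).-1 else a i.
  have Rb' : real_power R E r b'.
    exists b'; last by move=> i.
    exists (fun i => natv R b' i / r); last first.
      by move=> i; rewrite mulrC divfK // gt_eqF.
    apply: NP_up mE (np_NP npu) _ => i.
    rewrite ler_pdivlMr // mulrC /natv /b'.
    case: (eqVneq i j) => [->|ne].
      have e1 : (a j)%:R = ((a j).-1)%:R + 1 :> R by rewrite natr1 prednK.
      move: Hw; rewrite /w e1; lra.
    by rewrite ea; apply: ler_wpM2l; [apply: ltW | apply: uv].
  have le' : expo_le b' a.
    by move=> i; rewrite /b'; case: (i == j) => //; apply: leq_pred.
  have := Hmin b' Rb' le' j; rewrite /b' eqxx; lia.
have key : (0 < d)%N -> \sum_j w j <= d%:R - q%:R^-1.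
  move=> dpos.
  have [j0 Hj0] : exists j0, w j0 <= 1 - q%:R^-1.
    case: Hu => [[j0 ej0]|[m [Mm em]]].
      exists j0; rewrite /w ea ej0 subrr subr_ge0 invf_le1 // ?ler1n ?ltr0n //.
    exists (Ordinal dpos); set j := Ordinal dpos.
    have := w1 j; rewrite /w em /r => h.
    have q0' : (0 : R) < q%:R by rewrite ltr0n.
    have h' : (q * a j < q + p * m j)%N.
      rewrite -(ltr_nat R) natrD !natrM.
      have : q%:R * ((a j)%:R - p%:R / q%:R * (m j)%:R) < q%:R * (1 : R).
        by rewrite ltr_pM2l.
      have -> : q%:R * ((a j)%:R - p%:R / q%:R * (m j)%:R) =
                q%:R * (a j)%:R - p%:R * (m j)%:R :> R by field; rewrite gt_eqF.
      lra.
    have h'' : ((q * a j + 1)%:R <= (q + p * m j)%:R :> R) by rewrite ler_nat; lia.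
    move: h''; rewrite natrD !natrM => h''.
    rewrite -(ler_pM2l q0').
    have -> : q%:R * ((a j)%:R - p%:R / q%:R * (m j)%:R) =
              q%:R * (a j)%:R - p%:R * (m j)%:R :> R by field; rewrite gt_eqF.
    have -> : q%:R * (1 - q%:R^-1) = q%:R - 1 :> R by field; rewrite gt_eqF.
    lra.
  rewrite (bigD1 j0) //=.
  have S1 : \sum_(j < d) (1 : R) = d%:R by rewrite sumr_const card_ord.
  rewrite (bigD1 j0) //= in S1.
  have : \sum_(j < d | j != j0) w j <= \sum_(j < d | j != j0) (1 : R).
    by apply: ler_sum => j _; apply: ltW.
  lra.
exists (fun i => r * u i), (fun i => w i); split.
- by exists u.
- case: (posnP d) => [d0|dpos].
    exists (fun _ => 0); first split => //.
      by rewrite big1.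
    by move=> i; exfalso; case: i => i; rewrite d0.
  have c0 : (0 : R) <= d%:R - q%:R^-1.
    have : q%:R^-1 <= (1 : R) by rewrite invf_le1 // ?ler1n ?ltr0n.
    have : (1 : R) <= d%:R by rewrite ler1n.
    lra.
  have Sk := key dpos.
  case: (eqVneq (d%:R - q%:R^-1 : R) 0) => [ce|cne].
    exists (fun _ => 0); first split => //.
      by rewrite big1.
    move=> i; rewrite mulr0.
    have : w i <= \sum_j w j.
      rewrite (bigD1 i) //= lerDl; apply: sumr_ge0 => k _; exact: w0.
    have := w0 i; rewrite ce in Sk; lra.
  have cp : (0 : R) < d%:R - q%:R^-1 by rewrite lt_neqAle eq_sym cne.
  exists (fun i => w i / (d%:R - q%:R^-1)).
    split; first by move=> i; apply: divr_ge0 => //.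
    by rewrite -mulr_suml ler_pdivrMr // mul1r.
  by move=> i; rewrite mulrC divfK.
- by move=> i; rewrite /w; ring.
Qed.

Unset Implicit Arguments.

Theorem theorem3p5 (R : realType) (d : nat) (E : expo d -> Prop) (p q : nat) :
  monomial_ideal E -> (0 < p)%N -> (0 < q)%N ->
  [/\ (forall a, min_gen (real_power R E (p%:R / q%:R : R)) a -> Cset R E p q (natv R a)),
      (forall a, Cset R E p q (natv R a) -> real_power R E (p%:R / q%:R : R) a)
    & (forall a, real_power R E (p%:R / q%:R : R) a <->
                 gen_ideal (fun b => Cset R E p q (natv R b)) a)].
Proof.
move=> mE p0 q0; split.
- by move=> a; apply: part1.
- by move=> a; apply: part2.
- move=> a; split.
    move=> [b Sb ba].
    have Rb : real_power R E (p%:R / q%:R : R) b by exists b => // i.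
    have [m Mm mb] := exists_min_gen Rb.
    exists m; first exact: part1 Mm.
    by move=> i; apply: leq_trans (mb i) (ba i).
  move=> [b Cb ba].
  have [b' Sb' b'b] := part2 mE p0 q0 Cb.
  exists b' => // i; apply: leq_trans (b'b i) (ba i).
Qed.
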